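(* Let $\mathcal G=(V,E)$ be a connected DAG with $|V|\ge 3$ which has at least one subset $W\subseteq V$ of three vertices whose vertex-induced subgraph is connected, has a skeleton that is not the complete graph on three vertices, and is not a v-structure (i.e. not of the form $x\to z\leftarrow y$). Let $\mathcal A,\mathcal B$ be finite sets and $f:\mathcal A\to\mathcal B$ a surjection with $|\mathcal A|>|\mathcal B|>1$. Then $\hat f(\mathrm{im}(\mathcal G,\mathcal A))\not\subseteq \mathrm{im}(\mathcal G,\mathcal B)$; that is, there is a distribution on $\mathcal A^V$ factorising over $\mathcal G$ whose image under coordinatewise application of $f$ does not factorise over $\mathcal G$.
   Context: For a finite DAG $\mathcal G=(V,E)$ and a finite set $\mathcal C$, $\mathrm{im}(\mathcal G,\mathcal C)$ is the set of all probability distributions on $\mathcal C^V$ that factorise over $\mathcal G$, i.e. of the form $p(x)=\prod_{v\in V}q_v(x_v\mid x_{pa(v)})$ for conditional distributions $q_v$, where $pa(v)$ is the set of parents of $v$. For $f:\mathcal A\to\mathcal B$, $\hat f$ maps a distribution on $\mathcal A^V$ to its pushforward (image measure) on $\mathcal B^V$ under the coordinatewise map $(x_v)_v\mapsto(f(x_v))_v$. The vertex-induced subgraph on $W$ has vertex set $W$ and all edges of $E$ with both endpoints in $W$; its skeleton is the underlying undirected graph. *)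

(* Defs.v *)
From HB Require Import structures.
From mathcomp Require Import all_boot all_order all_algebra.
From mathcomp Require Import reals.
Set Implicit Arguments. Unset Strict Implicit. Unset Printing Implicit Defensive.
Import Order.TTheory GRing.Theory Num.Theory.
Local Open Scope ring_scope.

(* A directed graph on a finite vertex type V is given by its edge relation E:
   E u v means u -> v. *)

Definition acyclic (V : finType) (E : rel V) : Prop :=
  forall u v : V, E u v -> ~~ connect E v u.

Definition adj (V : finType) (E : rel V) : rel V := fun u v => E u v || E v u.

Definition dag_connected (V : finType) (E : rel V) : Prop :=
  forall u v : V, connect (adj E) u v.

Definition adjW (V : finType) (E : rel V) (W : {set V}) : rel V :=
  fun u v => [&& u \in W, v \in W & adj E u v].

Definition induced_connected (V : finType) (E : rel V) (W : {set V}) : Prop :=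
  forall u v, u \in W -> v \in W -> connect (adjW E W) u v.

Definition induced_complete (V : finType) (E : rel V) (W : {set V}) : Prop :=
  forall u v, u \in W -> v \in W -> u != v -> adj E u v.

Definition induced_vstructure (V : finType) (E : rel V) (W : {set V}) : Prop :=
  exists x y z : V, [/\ x != y, x != z, y != z, W = [set x; y; z] &
    forall u v, u \in W -> v \in W -> E u v = ((u == x) || (u == y)) && (v == z)].

Definition pa (V : finType) (E : rel V) (v : V) : {set V} := [set u | E u v].

Definition is_dist (R : realType) (V C : finType) (p : {ffun V -> C} -> R) : Prop :=
  (forall x, 0 <= p x) /\ \sum_x p x = 1.

(* p factorises over G: p(x) = prod_v q_v(x_v | x_pa(v)) with conditional
   distributions q_v; q v c x is q_v(c | x_pa(v)), depending on x only via
   the parent coordinates. *)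
Definition factorises (R : realType) (V C : finType) (E : rel V)
  (p : {ffun V -> C} -> R) : Prop :=
  exists q : V -> C -> {ffun V -> C} -> R,
    [/\ (forall v c (x y : {ffun V -> C}), (forall u, u \in pa E v -> x u = y u) -> q v c x = q v c y),
        (forall v c x, 0 <= q v c x),
        (forall v x, \sum_c q v c x = 1) &
        (forall x, p x = \prod_v q v (x v) x)].

Definition im (R : realType) (V C : finType) (E : rel V) (p : {ffun V -> C} -> R) : Prop :=
  is_dist p /\ factorises E p.

Definition fmapV (V A B : finType) (f : A -> B) (x : {ffun V -> A}) : {ffun V -> B} :=
  [ffun v => f (x v)].

Definition pushforward (R : realType) (V A B : finType) (f : A -> B)
  (p : {ffun V -> A} -> R) : {ffun V -> B} -> R :=
  fun y => \sum_(x | fmapV f x == y) p x.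

(* Main.v *)
Require Import Defs.
From HB Require Import structures.
From mathcomp Require Import all_boot all_order all_algebra.
From mathcomp Require Import reals.
From mathcomp Require Import ring lra.
Set Implicit Arguments. Unset Strict Implicit. Unset Printing Implicit Defensive.
Import Order.TTheory GRing.Theory Num.Theory.
Local Open Scope ring_scope.

Definition ext3 (V C : finType) (u m w : V) (d a b c : C) : {ffun V -> C} :=
  [ffun v => if v == u then a else if v == m then b else if v == w then c else d].

Lemma ext3_agree (V C : finType) (u m w r : V) (d a b c a' b' c' : C) :
  (r == u -> a = a') -> (r == m -> b = b') -> (r == w -> c = c') ->
  ext3 u m w d a b c r = ext3 u m w d a' b' c' r.
Proof.
move=> h1 h2 h3; rewrite !ffunE.
case: (eqVneq r u) => [/eqP/h1 //|_]; case: (eqVneq r m) => [/eqP/h2 //|_].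
by case: (eqVneq r w) => [/eqP/h3 //|_].
Qed.

Lemma prod3 (R : realType) (V : finType) (u m w : V) (F : V -> R) :
  u != m -> u != w -> m != w ->
  \prod_v F v = F u * F m * F w * \prod_(v | [&& v != u, v != m & v != w]) F v.
Proof.
move=> hum huw hmw.
rewrite (bigD1 u) //= (bigD1 m) 1?eq_sym //= (bigD1 w) /=; last by rewrite !(eq_sym w) huw hmw.
rewrite !mulrA; congr (_ * _); apply: eq_bigl => v; by rewrite andbA andbC.
Qed.

Lemma sum_ge2 (R : realType) (I : finType) (F : I -> R) (i j : I) :
  (forall k, 0 <= F k) -> i != j -> F i + F j <= \sum_k F k.
Proof.
move=> h0 hij; rewrite (bigD1 i) //= (bigD1 j) 1?eq_sym //= addrA lerDl.
by apply: sumr_ge0.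
Qed.

Lemma sum_ge1 (R : realType) (I : finType) (F : I -> R) (i : I) :
  (forall k, 0 <= F k) -> F i <= \sum_k F k.
Proof.
move=> h0; rewrite (bigD1 i) //= lerDl; by apply: sumr_ge0.
Qed.

Lemma ext3_u (V C : finType) (u m w : V) (d a b c : C) : ext3 u m w d a b c u = a.
Proof. by rewrite ffunE eqxx. Qed.
Lemma ext3_m (V C : finType) (u m w : V) (d a b c : C) : m != u -> ext3 u m w d a b c m = b.
Proof. by move=> h; rewrite ffunE (negbTE h) eqxx. Qed.
Lemma ext3_w (V C : finType) (u m w : V) (d a b c : C) : w != u -> w != m -> ext3 u m w d a b c w = c.
Proof. by move=> h h'; rewrite ffunE (negbTE h) (negbTE h') eqxx. Qed.

Ltac depkill := apply: ext3_agree => /eqP Hr //; subst;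
  exfalso; match goal with Er : is_true (?E _ _) |- _ => move: Er; apply/negP; assumption end.

Lemma noB (R : realType) (V B : finType) (E : rel V) (u m w : V) (b0 b1 : B) (ch : bool)
  (p : {ffun V -> B} -> R)
  (hum : u != m) (huw : u != w) (hmw : m != w)
  (Huu : ~~ E u u) (Hmm : ~~ E m m) (Hww : ~~ E w w) (Huw : ~~ E u w) (Hwu : ~~ E w u)
  (Hwm : ~~ E w m) (Hch : if ch then ~~ E m u else ~~ E u m) (hb : b0 != b1)
  (Hp0 : p (ext3 u m w b0 b0 b0 b0) = 1/2) (Hp1 : p (ext3 u m w b0 b1 b0 b1) = 1/2) :
  ~ factorises E p.
Proof.
move=> [q [hdep hge0 hsum hprod]].
pose e := ext3 u m w b0.
pose Q := fun a b c => q u a (e a b c) * q m b (e a b c) * q w c (e a b c).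
have hle1 v c x : q v c x <= 1 by rewrite -(hsum v x); apply: sum_ge1.
have hQ0 a b c : 0 <= Q a b c by rewrite /Q !mulr_ge0.
have hpQ a b c : p (e a b c) <= Q a b c.
  rewrite hprod (prod3 _ hum huw hmw) /e ext3_u ext3_m 1?eq_sym // ext3_w 1?eq_sym //.
  apply: ler_piMr; first by rewrite !mulr_ge0.
  by apply: prodr_ile1 => v _; rewrite hge0 hle1.
have [hsQ hcr] : \sum_a \sum_b \sum_c Q a b c = 1 /\
    Q b0 b0 b0 * Q b1 b0 b1 = Q b0 b0 b1 * Q b1 b0 b0.
  case: ch Hch => Hch.
  - (* chain u -> m -> w *)
    have e1 a b c : q u a (e a b c) = q u a (e b0 b0 b0).
      by apply: hdep => r; rewrite inE => Er; depkill.
    have e2 a b c : q m b (e a b c) = q m b (e a b0 b0).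
      by apply: hdep => r; rewrite inE => Er; depkill.
    have e3 a b c : q w c (e a b c) = q w c (e b0 b b0).
      by apply: hdep => r; rewrite inE => Er; depkill.
    have hQ a b c : Q a b c = q u a (e b0 b0 b0) * q m b (e a b0 b0) * q w c (e b0 b b0).
      by rewrite /Q e1 e2 e3.
    split; last by rewrite !hQ; ring.
    under eq_bigr => a _ do under eq_bigr => b _ do
      rewrite (eq_bigr _ (fun c _ => hQ a b c)) -mulr_sumr hsum mulr1.
    under eq_bigr => a _ do rewrite -mulr_sumr hsum mulr1.
    by rewrite hsum.
  - (* fork u <- m -> w *)
    have e1 a b c : q u a (e a b c) = q u a (e b0 b b0).
      by apply: hdep => r; rewrite inE => Er; depkill.
    have e2 a b c : q m b (e a b c) = q m b (e b0 b0 b0).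
      by apply: hdep => r; rewrite inE => Er; depkill.
    have e3 a b c : q w c (e a b c) = q w c (e b0 b b0).
      by apply: hdep => r; rewrite inE => Er; depkill.
    have hQ a b c : Q a b c = q m b (e b0 b0 b0) * q u a (e b0 b b0) * q w c (e b0 b b0).
      by rewrite /Q e1 e2 e3; ring.
    split; last by rewrite !hQ; ring.
    under eq_bigr => a _ do under eq_bigr => b _ do
      rewrite (eq_bigr _ (fun c _ => hQ a b c)) -mulr_sumr hsum mulr1.
    rewrite exchange_big /=.
    under eq_bigr => b _ do rewrite -mulr_sumr hsum mulr1.
    by rewrite hsum.
have h1 : Q b0 b0 b0 + Q b0 b0 b1 <= \sum_c Q b0 b0 c by apply: sum_ge2.
have h2 : \sum_c Q b0 b0 c <= \sum_b \sum_c Q b0 b c.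
  by apply: (@sum_ge1 _ _ (fun b => \sum_c Q b0 b c)) => k; apply: sumr_ge0.
have h3 : Q b1 b0 b1 <= \sum_c Q b1 b0 c by apply: sum_ge1.
have h4 : \sum_c Q b1 b0 c <= \sum_b \sum_c Q b1 b c.
  by apply: (@sum_ge1 _ _ (fun b => \sum_c Q b1 b c)) => k; apply: sumr_ge0.
have h5 : \sum_b \sum_c Q b0 b c + \sum_b \sum_c Q b1 b c <= \sum_a \sum_b \sum_c Q a b c.
  by apply: (@sum_ge2 _ _ (fun a => \sum_b \sum_c Q a b c)) => // k; apply: sumr_ge0 => *; apply: sumr_ge0.
have g0 := hpQ b0 b0 b0; have g1 := hpQ b1 b0 b1.
rewrite /e Hp0 in g0; rewrite /e Hp1 in g1.
have q1 := hQ0 b0 b0 b1; have q2 := hQ0 b1 b0 b0.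
rewrite hsQ in h5.
nra.
Qed.

Lemma ext3_eq (V C : finType) (u m w : V) (d a b c a' b' c' : C) :
  u != m -> u != w -> m != w ->
  (ext3 u m w d a b c == ext3 u m w d a' b' c') = [&& a == a', b == b' & c == c'].
Proof.
move=> hum huw hmw; apply/eqP/and3P => [h|[/eqP-> /eqP-> /eqP->]] //.
have := congr1 (fun x : {ffun V -> C} => x u) h; have := congr1 (fun x : {ffun V -> C} => x m) h;
have := congr1 (fun x : {ffun V -> C} => x w) h.
rewrite /= !ext3_u !ext3_m 1?eq_sym // !ext3_w 1?eq_sym // 1?eq_sym //.
by move=> h1 h2 h3; rewrite h1 h2 h3 !eqxx.
Qed.

Ltac split_val a a0 a1 a2 n0 n1 n2 := case: (eqVneq a a0) => [?|n0]; [subst a|case: (eqVneq a a1) => [?|n1]; [subst a|case: (eqVneq a a2) => [?|n2]; [subst a|]]].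
Ltac fin h01 h02 h12 h10 h20 h21 :=
  rewrite ?eqxx ?(negbTE h01) ?(negbTE h02) ?(negbTE h12) ?(negbTE h10) ?(negbTE h20) ?(negbTE h21);
  do 20 (try match goal with H : is_true (_ != _) |- _ => rewrite ?(negbTE H); clear H end);
  rewrite /= ?mulr1n ?mulr0n ?addr0 ?add0r ?mulr1 ?mul1r ?mulr0 ?mul0r //.

Definition mix (R : realType) (A : finType) (a0 a' c : A) : R :=
  ((c == a0)%:R + (c == a')%:R) / 2.

Definition qA (R : realType) (V A : finType) (u m w : V) (a0 a1 a2 : A) (ch : bool)
  (v : V) (c : A) (x : {ffun V -> A}) : R :=
  if v == u then (if ch then mix R a0 a2 c else (c == (if x m == a0 then a0 else a2))%:R)
  else if v == m then (if ch then (c == (if x u == a0 then a0 else a1))%:R else mix R a0 a1 c)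
  else if v == w then (c == (if x m == a0 then a0 else a2))%:R
  else (c == a0)%:R.

Definition pA (R : realType) (V A : finType) (u m w : V) (a0 a1 a2 : A) (x : {ffun V -> A}) : R :=
  ((x == ext3 u m w a0 a0 a0 a0)%:R + (x == ext3 u m w a0 a2 a1 a2)%:R) / 2.

Lemma sum_ind (R : realType) (A : finType) (k : A) : \sum_c (c == k)%:R = (1 : R).
Proof. by rewrite (bigD1 k) //= eqxx big1 ?addr0 // => c /negbTE ->. Qed.

Lemma yesA (R : realType) (V A : finType) (E : rel V) (u m w : V) (a0 a1 a2 : A) (ch : bool)
  (hum : u != m) (huw : u != w) (hmw : m != w)
  (Hch : if ch then E u m else E m u) (Hmw : E m w)
  (h01 : a0 != a1) (h02 : a0 != a2) (h12 : a1 != a2) :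
  im E (pA R u m w a0 a1 a2).
Proof.
split.
  split; first by move=> x; rewrite /pA divr_ge0 ?addr_ge0 ?ler0n.
  rewrite -mulr_suml big_split /= !sum_ind; lra.
exists (qA R u m w a0 a1 a2 ch); split.
- move=> v c x y hxy; rewrite /qA.
  case: (eqVneq v u) => [hv|nu].
    subst v; case: ch Hch => Hch //; by rewrite hxy // inE.
  case: (eqVneq v m) => [hv|nm].
    subst v; case: ch Hch => Hch //; by rewrite hxy // inE.
  case: (eqVneq v w) => [hv|nw] //; subst v; by rewrite hxy // inE.
- move=> v c x; rewrite /qA /mix.
  case: (v == u); [|case: (v == m); [|case: (v == w)]]; case: (ch);
     by rewrite ?divr_ge0 ?addr_ge0 ?ler0n.
- move=> v x; rewrite /qA.
  have hm (a' : A) : a0 != a' -> \sum_c mix R a0 a' c = 1.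
    move=> h; rewrite /mix -mulr_suml big_split /= !sum_ind; lra.
  case: (v == u); [|case: (v == m); [|case: (v == w)]]; case: (ch);
     by rewrite ?sum_ind ?hm.
- move=> x.
  rewrite (prod3 _ hum huw hmw).
  under eq_bigr => v /and3P[nu nm nw] do rewrite /qA (negbTE nu) (negbTE nm) (negbTE nw).
  case: (boolP [forall v, [&& v != u, v != m & v != w] ==> (x v == a0)]) => hall.
  + rewrite big1 ?mulr1; last by move=> v hv; move/forallP/(_ v): hall; rewrite hv /= => ->.
    have hx : x = ext3 u m w a0 (x u) (x m) (x w).
      apply/ffunP => v; rewrite ffunE.
      case: (eqVneq v u) => [->//|nu]; case: (eqVneq v m) => [->//|nm];
      case: (eqVneq v w) => [->//|nw].
      by move/forallP/(_ v): hall; rewrite nu nm nw /= => /eqP.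
    rewrite /pA hx !ext3_eq //.
    have hmu : m != u by rewrite eq_sym.
    have hwu : w != u by rewrite eq_sym.
    have hwm : w != m by rewrite eq_sym.
    rewrite /qA !ext3_u !(ext3_m w _ _ _ _ hmu) !(ext3_w _ _ _ _ hwu hwm).
    rewrite eqxx (negbTE hmu) (negbTE hwu) (negbTE hwm) eqxx eqxx.
    move: (x u) (x m) (x w) => a b c.
    clear hall hx Hch hum huw hmw hmu hwu hwm Hmw.
    have h10 : a1 != a0 by rewrite eq_sym.
    have h20 : a2 != a0 by rewrite eq_sym.
    have h21 : a2 != a1 by rewrite eq_sym.
    case: ch; rewrite /mix;
    split_val a a0 a1 a2 na0 na1 na2; split_val b a0 a1 a2 nb0 nb1 nb2;
    split_val c a0 a1 a2 nc0 nc1 nc2; fin h01 h02 h12 h10 h20 h21.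
  + move: hall; rewrite negb_forall => /existsP[t]; rewrite negb_imply => /andP[ht hxt].
    rewrite (bigD1 t) //= (negbTE hxt) mul0r mulr0.
    have hne (a b c : A) : (x == ext3 u m w a0 a b c) = false.
      apply/negbTE/eqP => hx; move: hxt; rewrite hx ffunE.
      by case/and3P: ht => /negbTE-> /negbTE-> /negbTE->; rewrite eqxx.
    by rewrite /pA !hne addr0 mul0r.
Qed.

Local Close Scope ring_scope.

Lemma noloop (V : finType) (E : rel V) : acyclic E -> forall v, ~~ E v v.
Proof. by move=> H v; apply/negP => h; move: (H v v h); rewrite connect0. Qed.

Lemma noanti (V : finType) (E : rel V) : acyclic E -> forall x y, E x y -> ~~ E y x.
Proof. by move=> H x y h; apply/negP => h'; move: (H x y h); rewrite connect1. Qed.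

Lemma neighbor (V : finType) (E : rel V) (W : {set V}) x z :
  x != z -> connect (adjW E W) x z -> exists2 y, y \in W & adj E x y.
Proof.
move=> hxz /connectP[[|y p] /= hp hl]; first by rewrite hl eqxx in hxz.
case/andP: hp => /and3P[_ hy hadj] _; by exists y.
Qed.

Lemma adjC (V : finType) (E : rel V) x y : adj E x y = adj E y x.
Proof. by rewrite /adj orbC. Qed.

Lemma getW (V : finType) (E : rel V) (Hacyc : acyclic E)
  (HW : exists W : {set V}, [/\ #|W| = 3%N, induced_connected E W,
          ~ induced_complete E W & ~ induced_vstructure E W]) :
  exists u m w, [/\ [&& u != m, u != w & m != w], E m w, E u m || E m u & ~~ adj E u w].
Proof.
case: HW => W [hc hcon hncomp hnv].
have nl := noloop Hacyc.
case: (boolP [exists x in W, exists z in W, (x != z) && ~~ adj E x z]); last first.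
  move=> hn; exfalso; apply: hncomp => u v hu hv huv.
  move: hn; rewrite negb_exists_in => /forall_inP/(_ u hu).
  rewrite negb_exists_in => /forall_inP/(_ v hv).
  by rewrite negb_and huv negbK.
move=> /exists_inP[x hx /exists_inP[z hz /andP[hxz hnadj]]].
pose D := W :\: [set x; z].
have hD : #|D| = 1%N.
  rewrite cardsDS ?hc ?cards2 ?hxz //.
  by apply/subsetP => v; rewrite !inE => /orP[]/eqP->.
have [y hy] : exists y, y \in D.
  apply/set0Pn; by rewrite -card_gt0 hD.
move: (hy); rewrite !inE negb_or => /andP[/andP[hyx hyz] hyW].
have hmem v : v \in W -> [|| v == x, v == y | v == z].
  move=> hv; case: (boolP (v \in [set x; z])); first by rewrite !inE => /orP[]->; rewrite ?orbT.
  move=> hvn; have hvD : v \in D by rewrite inE hvn hv.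
  have : (#|D| <= 1)%N by rewrite hD.
  by move/card_le1_eqP/(_ v y hvD hy) ->; rewrite eqxx orbT.
have [y1 hy1 hxy1] := neighbor hxz (hcon x z hx hz).
have hxy : adj E x y.
  case/or3P: (hmem _ hy1) hxy1 => /eqP-> // h.
  - by move: h; rewrite /adj orbb (negbTE (nl x)).
  - by rewrite h in hnadj.
have hzx : z != x by rewrite eq_sym.
have [y2 hy2 hzy2] := neighbor hzx (hcon z x hz hx).
have hzy : adj E z y.
  case/or3P: (hmem _ hy2) hzy2 => /eqP-> // h.
  - by rewrite adjC h in hnadj.
  - by move: h; rewrite /adj orbb (negbTE (nl z)).
have hnv' : ~~ (E x y && E z y).
  apply/negP => /andP[Exy Ezy]; apply: hnv; exists x, z, y.
  have hWeq : W = [set x; z; y].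
    apply/setP => v; rewrite !inE; apply/idP/idP.
      by move/hmem => /or3P[]->; rewrite ?orbT.
    by do 3 (case: eqP => [->//|_]).

  rewrite eq_sym in hyx; rewrite eq_sym in hyz.
  split => //; move=> a b; rewrite hWeq !inE.
  have Eyx := negbTE (noanti Hacyc Exy); have Eyz := negbTE (noanti Hacyc Ezy).
  move: hnadj; rewrite /adj negb_or => /andP[/negbTE Exz /negbTE Ezx].
  have nxz := negbTE hxz; have nzx : (z == x) = false by rewrite eq_sym.
  have nxy := negbTE hyx; have nyx : (y == x) = false by rewrite eq_sym.
  have nzy := negbTE hyz; have nyz : (y == z) = false by rewrite eq_sym.
  have Exx := negbTE (nl x); have Eyy := negbTE (nl y); have Ezz := negbTE (nl z).
  by move=> /orP[/orP[]|]/eqP-> /orP[/orP[]|]/eqP->;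
     rewrite ?eqxx ?Exy ?Ezy ?Eyx ?Eyz ?Exz ?Ezx ?nxz ?nzx ?nxy ?nyx ?nzy ?nyz ?Exx ?Eyy ?Ezz ?orbT.
case: (boolP (E y z)) => Eyz.
  exists x, y, z; split => //; first by apply/and3P; split => //; rewrite eq_sym.
have Ezy : E z y by move: hzy; rewrite /adj (negbTE Eyz) orbF.
have Eyx : E y x.
  move: hxy; rewrite /adj; case: (E x y) hnv' => //=; by rewrite Ezy.
exists z, y, x; split => //.
- by apply/and3P; split => //; rewrite eq_sym.
all: try by rewrite Ezy.
all: try by rewrite adjC.
Qed.

Local Open Scope ring_scope.

Lemma sum_ind_pred (R : realType) (T : finType) (P : pred T) (k : T) :
  \sum_(x | P x) (x == k)%:R = (P k)%:R :> R.
Proof.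
rewrite big_mkcond /= (bigD1 k) //= eqxx big1 ?addr0; first by case: (P k).
by move=> x /negbTE ->; case: (P x).
Qed.

Lemma fmap_ext3 (V A B : finType) (f : A -> B) (u m w : V) (d a b c : A) :
  fmapV f (ext3 u m w d a b c) = ext3 u m w (f d) (f a) (f b) (f c).
Proof. by apply/ffunP => v; rewrite !ffunE; repeat case: ifP. Qed.

Lemma push_pA (R : realType) (V A B : finType) (f : A -> B) (u m w : V) (a0 a1 a2 : A) y :
  pushforward f (pA R u m w a0 a1 a2) y =
  ((fmapV f (ext3 u m w a0 a0 a0 a0) == y)%:R + (fmapV f (ext3 u m w a0 a2 a1 a2) == y)%:R) / 2.
Proof.
rewrite /pushforward /pA -mulr_suml big_split /=.
by rewrite !(sum_ind_pred R (fun x => fmapV f x == y)).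
Qed.

Unset Implicit Arguments.
Theorem mainTheorem2 (R : realType) (V : finType) (E : rel V)
  (Hacyc : acyclic E) (Hconn : dag_connected E) (HV : (3 <= #|V|)%N)
  (HW : exists W : {set V}, [/\ #|W| = 3%N, induced_connected E W,
          ~ induced_complete E W & ~ induced_vstructure E W])
  (A B : finType) (f : A -> B) (Hsurj : forall b : B, exists a : A, f a = b)
  (HAB : (#|B| < #|A|)%N) (HB1 : (1 < #|B|)%N) :
  exists p : {ffun V -> A} -> R,
    im E p /\ ~ im E (pushforward f p).
Proof.
have [u [m [w [/and3P[hum huw hmw] Emw Hum Hnadj]]]] := getW Hacyc HW.
have [a0 [a1 [h01 hf01]]] : exists a0 a1, a0 != a1 /\ f a0 = f a1.
  case: (boolP [exists a0, exists a1, (a0 != a1) && (f a0 == f a1)]).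
    by move=> /existsP[a0 /existsP[a1 /andP[h /eqP e]]]; exists a0, a1.
  move=> hn; exfalso.
  have finj : injective f.
    move=> x y hxy; apply/eqP; apply: contraNT hn => hne.
    by apply/existsP; exists x; apply/existsP; exists y; rewrite hne hxy eqxx.
  by have := leq_card _ finj; rewrite leqNgt HAB.
pose b0 := f a0.
have [b1 hb1] : exists b1, b1 != b0.
  case: (boolP [exists b, b != b0]); first by move/existsP.
  move=> hn; exfalso.
  have : (#|B| <= 1)%N.
    apply/card_le1_eqP => x y _ _.
    move: hn; rewrite negb_exists => /forallP hn.
    by move: (hn x) (hn y); rewrite !negbK => /eqP-> /eqP->.
  by rewrite leqNgt HB1.
have [a2 fa2] := Hsurj b1.
have h02 : a0 != a2 by apply: contra hb1 => /eqP e; rewrite -fa2 -e /b0.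
have h12 : a1 != a2 by apply: contra hb1 => /eqP e; rewrite -fa2 -e /b0 hf01.
have Hch : if E u m then E u m else E m u.
  by case: (boolP (E u m)) Hum => //= _; rewrite orbF.
exists (pA R u m w a0 a1 a2); split; first by eapply yesA; eassumption.
move=> [_ hfact].
have nl := noloop Hacyc.
move: Hnadj; rewrite /adj negb_or => /andP[Huw Hwu].
have Hch' : if E u m then ~~ E m u else ~~ E u m.
  case: (boolP (E u m)) => h; [by have := noanti Hacyc h | by []].
have hb : b0 != b1 by rewrite eq_sym.
apply: (noB (u:=u) (m:=m) (w:=w) (ch:=E u m) hum huw hmw (nl u) (nl m) (nl w) Huw Hwu
          (noanti Hacyc Emw) Hch' hb _ _ hfact).
- rewrite push_pA !fmap_ext3 -hf01 !ext3_eq // eqxx /= fa2 (negbTE hb1) /= mulr0n addr0.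
  rewrite /b0; lra.
- rewrite push_pA !fmap_ext3 -hf01 !ext3_eq // eqxx /= fa2 eqxx (eq_sym (f a0)) (negbTE hb1) /= mulr0n add0r.
  rewrite /b0; lra.
Qed.
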